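(* Consider the uniform case $\pi^\ell=\mathbf 1/K$. Let $t\in[0,1]$ with $\alpha_t<1$, let $\mathbf x_t\in\mathsf X$, $\ell\in\{1,\dots,L\}$, and write $\mathbf x_t^\ell=e_k$. Set $\nu:=\hat{\mathbf x}^{\mathrm{loo}}_0(\mathbf x_t,t)^\ell$ and $\mu:=\sum_x p^\ell_{0|t}(x\mid\mathbf x_t)\,x$ (the denoiser vector). Then: (i) $$\mu=\frac{(1-\alpha_t)\nu+K\alpha_t\,\nu_k\, e_k}{1-\alpha_t+K\alpha_t\nu_k},$$ and $$\nu=\frac{(1+(K-1)\alpha_t)\mu-K\alpha_t\,\mu_k\,e_k}{1+(K-1)\alpha_t-K\alpha_t\mu_k},$$ where $\nu_k=\langle e_k,\nu\rangle$ and $\mu_k=\langle e_k,\mu\rangle$. (ii) In particular, if $\nu=\mathrm{softmax}(f)$ for some $f\in\mathbb R^K$, then $$\mu=\mathrm{softmax}\Big(f+\log\big(1+\tfrac{K\alpha_t}{1-\alpha_t}\big)\,e_k\Big).$$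
   Context: **Setup.** - Let $K\ge2$, $L\ge1$ and $\mathsf V=\{1,\dots,K\}$. Tokens are identified with the standard basis vectors $e_1,\dots,e_K$ of $\mathbb R^K$. - $\mathsf X=\mathsf V^L$. For $\mathbf x\in\mathsf X$, $\mathbf x^\ell$ is its $\ell$-th token and $\mathbf x^{-\ell}$ denotes the other tokens. - $p_0$ is a distribution on $\mathsf X$. - $\alpha:[0,1]\to[0,1]$ is nonincreasing with $\alpha_0=1$. - Uniform forward kernel: $q^\ell_{t|0}(x_t\mid x_0)=\langle x_t,\alpha_t x_0+(1-\alpha_t)\mathbf 1/K\rangle$, factorized over positions. - $X_0\sim p_0$ and $X_t\mid X_0\sim q_{t|0}(\cdot\mid X_0)$. **Posteriors.** - $p^\ell_{0|t}(x\mid\mathbf x_t)=\mathbb P(X_0^\ell=x\mid X_t=\mathbf x_t)$. - $\hat{\mathbf x}^{\mathrm{loo}}_0(\mathbf x_t,t)^\ell=\mathbb E[X_0^\ell\mid X_t^{-\ell}=\mathbf x_t^{-\ell}]$. - When $\alpha_t<1$, every state has positive probability under the law of $X_t$. *)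

(* Defs.v *)
From HB Require Import structures.
From mathcomp Require Import all_boot all_order all_algebra.
From mathcomp Require Import all_classical all_reals all_analysis.
Set Implicit Arguments. Unset Strict Implicit. Unset Printing Implicit Defensive.
Import Order.TTheory GRing.Theory Num.Theory.
Local Open Scope ring_scope.

(* Sequences x in X = V^L, V = 'I_K (token j <-> basis vector e_j). *)
Definition seqX (K L : nat) := {ffun 'I_L -> 'I_K}.

Definition evec (R : ringType) (K : nat) (k : 'I_K) : 'rV[R]_K :=
  \row_j (j == k)%:R.

Definition softmax (R : realType) (K : nat) (f : 'rV[R]_K) : 'rV[R]_K :=
  \row_j (expR (f 0 j) / \sum_(i < K) expR (f 0 i)).

(* uniform forward kernel q_{t|0}(xt | x0) with a = alpha_t, factorized over positions:
   q^l(xt^l | x0^l) = <xt^l, a x0^l + (1-a) 1/K> *)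
Definition qkern (R : realType) (K L : nat) (a : R) (xt x0 : seqX K L) : R :=
  \prod_(l < L) (a * (xt l == x0 l)%:R + (1 - a) / K%:R).

Definition joint (R : realType) (K L : nat) (p0 : seqX K L -> R) (a : R)
  (x0 xt : seqX K L) : R := p0 x0 * qkern a xt x0.

Definition pXt (R : realType) (K L : nat) (p0 : seqX K L -> R) (a : R)
  (xt : seqX K L) : R := \sum_(x0 : seqX K L) joint p0 a x0 xt.

Definition posterior (R : realType) (K L : nat) (p0 : seqX K L -> R) (a : R)
  (l : 'I_L) (xt : seqX K L) (j : 'I_K) : R :=
  (\sum_(x0 : seqX K L | x0 l == j) joint p0 a x0 xt) / pXt p0 a xt.

(* denoiser vector mu = sum_x p^l_{0|t}(x | xt) x *)
Definition denoiser (R : realType) (K L : nat) (p0 : seqX K L -> R) (a : R)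
  (l : 'I_L) (xt : seqX K L) : 'rV[R]_K :=
  \row_j posterior p0 a l xt j.

Definition agree_off (K L : nat) (l : 'I_L) (xt y : seqX K L) : bool :=
  [forall m : 'I_L, (m != l) ==> (y m == xt m)].

(* leave-one-out denoiser: E[X0^l | Xt^{-l} = xt^{-l}], whose j-th coordinate is
   P(X0^l = j, Xt^{-l} = xt^{-l}) / P(Xt^{-l} = xt^{-l}) *)
Definition xloo (R : realType) (K L : nat) (p0 : seqX K L -> R) (a : R)
  (l : 'I_L) (xt : seqX K L) : 'rV[R]_K :=
  \row_j ((\sum_(x0 : seqX K L | x0 l == j)
             \sum_(y : seqX K L | agree_off l xt y) joint p0 a x0 y)
          / (\sum_(x0 : seqX K L)
             \sum_(y : seqX K L | agree_off l xt y) joint p0 a x0 y)).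

(* Main.v *)
Require Import Defs.
From HB Require Import structures.
From mathcomp Require Import all_boot all_order all_algebra.
From mathcomp Require Import all_classical all_reals all_analysis.
From mathcomp Require Import ring lra.
Import Order.TTheory GRing.Theory Num.Theory.
Set Implicit Arguments. Unset Strict Implicit.
Local Open Scope ring_scope.

Definition upd (K L : nat) (l : 'I_L) (xt : seqX K L) (v : 'I_K) : seqX K L :=
  [ffun m => if m == l then v else xt m].

Lemma sum_agree (R : realType) (K L : nat) (l : 'I_L) (xt : seqX K L)
  (F : seqX K L -> R) :
  \sum_(y | agree_off l xt y) F y = \sum_(v : 'I_K) F (upd l xt v).
Proof.
rewrite (partition_big (fun y : seqX K L => y l) predT) //=.
apply: eq_bigr => v _; rewrite (big_pred1 (upd l xt v)) // => y /=.
apply/andP/eqP => [[/forallP H /eqP <-]| ->].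
- apply/ffunP => m; rewrite ffunE; case: eqP => [->|ne] //.
  by move: (H m) => /implyP/(_ (introN eqP ne))/eqP.
- rewrite /upd ffunE eqxx; split=> //; apply/forallP => m; apply/implyP => /negbTE.
  by rewrite ffunE => ->.
Qed.

Definition wgt (R : realType) (K L : nat) (a : R) (l : 'I_L) (xt x0 : seqX K L) : R :=
  \prod_(m < L | m != l) (a * (xt m == x0 m)%:R + (1 - a) / K%:R).

Lemma qkern_split (R : realType) (K L : nat) (a : R) (l : 'I_L) (xt x0 : seqX K L) (v : 'I_K) :
  qkern a (upd l xt v) x0 = (a * (v == x0 l)%:R + (1 - a) / K%:R) * wgt a l xt x0.
Proof.
rewrite /qkern (bigD1 l) //= /upd ffunE eqxx; congr (_ * _).
by apply: eq_bigr => m /negbTE; rewrite ffunE => ->.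
Qed.

Lemma qkern_xt (R : realType) (K L : nat) (a : R) (l : 'I_L) (xt x0 : seqX K L) :
  qkern a xt x0 = (a * (xt l == x0 l)%:R + (1 - a) / K%:R) * wgt a l xt x0.
Proof.
have E : xt = upd l xt (xt l).
  by apply/ffunP => m; rewrite ffunE; case: eqP => [->|].
by rewrite {1}E qkern_split.
Qed.

Lemma sum_ind (R : realType) (K : nat) (a : R) (j : 'I_K) (hK : (0 < K)%N) :
  \sum_(v < K) (a * (v == j)%:R + (1 - a) / K%:R) = 1.
Proof.
rewrite big_split /= sumr_const card_ord.
have hK' : (K%:R : R) != 0 by rewrite pnatr_eq0 -lt0n.
rewrite -mulrnAr -(mulr_natr (K%:R^-1)) mulVf // mulr1 -big_distrr /= (bigD1 j) //= eqxx big1 ?addr0.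
  by rewrite mulr1 addrC subrK.
by move=> i /negbTE ->.
Qed.

Lemma inner_sum (R : realType) (K L : nat) (hK : (0 < K)%N) (p0 : seqX K L -> R) (a : R)
  (l : 'I_L) (xt x0 : seqX K L) :
  \sum_(y | agree_off l xt y) joint p0 a x0 y = p0 x0 * wgt a l xt x0.
Proof.
rewrite sum_agree /joint.
under eq_bigr => v _ do rewrite qkern_split mulrCA.
by rewrite -big_distrl /= sum_ind // mul1r.
Qed.

Definition Aj (R : realType) (K L : nat) (p0 : seqX K L -> R) (a : R)
  (l : 'I_L) (xt : seqX K L) (j : 'I_K) : R :=
  \sum_(x0 : seqX K L | x0 l == j) p0 x0 * wgt a l xt x0.

Lemma xloo_eq (R : realType) (K L : nat) (hK : (0 < K)%N) (p0 : seqX K L -> R) (a : R)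
  (l : 'I_L) (xt : seqX K L) (j : 'I_K) :
  xloo p0 a l xt 0 j = Aj p0 a l xt j / \sum_i Aj p0 a l xt i.
Proof.
rewrite /xloo mxE; congr (_ / _).
  by apply: eq_bigr => x0 _; rewrite inner_sum.
rewrite (partition_big (fun x0 : seqX K L => x0 l) predT) //=.
apply: eq_bigr => i _; apply: eq_bigr => x0 _; by rewrite inner_sum.
Qed.

Lemma denoiser_eq (R : realType) (K L : nat) (p0 : seqX K L -> R) (a : R)
  (l : 'I_L) (xt : seqX K L) (j : 'I_K) :
  denoiser p0 a l xt 0 j =
  (Aj p0 a l xt j * (a * (xt l == j)%:R + (1 - a) / K%:R)) /
  \sum_i (Aj p0 a l xt i * (a * (xt l == i)%:R + (1 - a) / K%:R)).
Proof.
rewrite /denoiser /posterior /pXt mxE; congr (_ / _).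
  rewrite /Aj big_distrl /=; apply: eq_bigr => x0 /eqP <-.
  by rewrite /joint (qkern_xt _ l) mulrA mulrAC.
rewrite (partition_big (fun x0 : seqX K L => x0 l) predT) //=.
apply: eq_bigr => i _; rewrite /Aj big_distrl /=; apply: eq_bigr => x0 /eqP <-.
by rewrite /joint (qkern_xt _ l) mulrA mulrAC.
Qed.

Lemma evecE (R : ringType) (K : nat) (k : 'I_K) (i : 'I_1) (j : 'I_K) :
  evec R k i j = (j == k)%:R.
Proof. by rewrite /evec mxE. Qed.

Lemma addscE (R : ringType) (K : nat) (f g : 'rV[R]_K) (c : R) i j :
  (f + c *: g) i j = f i j + c * g i j.
Proof. by rewrite !mxE. Qed.

Theorem mainTheorem4 (R : realType) (K L : nat) (hK : (2 <= K)%N) (hL : (1 <= L)%N)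
  (p0 : seqX K L -> R)
  (hp0 : forall x, 0 <= p0 x) (hp0sum : \sum_(x : seqX K L) p0 x = 1)
  (alpha : R -> R)
  (halpha_range : forall s, 0 <= s <= 1 -> 0 <= alpha s <= 1)
  (halpha_mono : forall s u, 0 <= s -> s <= u -> u <= 1 -> alpha u <= alpha s)
  (halpha0 : alpha 0 = 1)
  (t : R) (ht : 0 <= t <= 1) (hat : alpha t < 1)
  (xt : seqX K L) (l : 'I_L) :
  let a := alpha t in
  let k := xt l in
  let nu := xloo p0 a l xt in
  let mu := denoiser p0 a l xt in
  [/\ mu = (1 - a + K%:R * a * nu 0 k)^-1 *:
             ((1 - a) *: nu + (K%:R * a * nu 0 k) *: evec R k),
      nu = (1 + (K%:R - 1) * a - K%:R * a * mu 0 k)^-1 *: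
             ((1 + (K%:R - 1) * a) *: mu - (K%:R * a * mu 0 k) *: evec R k)
    & forall f : 'rV[R]_K, nu = softmax f ->
      mu = softmax (f + ln (1 + K%:R * a / (1 - a)) *: evec R k)].
Proof.
move=> a k nu mu.
have /andP[ha0 _] := halpha_range t ht.
have ha1 : a < 1 by [].
have hK0 : (0 < K)%N by apply: leq_trans hK.
have hKr : (0 : R) < K%:R by rewrite ltr0n.
set c := (1 - a) / K%:R.
have hc : 0 < c by rewrite divr_gt0 // subr_gt0.
set A := Aj p0 a l xt.
set S := \sum_i A i.
have hw : forall x0, 0 < wgt a l xt x0.
  move=> x0; apply: prodr_gt0 => m _; apply: ltr_wpDl => //.
  by apply: mulr_ge0 => //; rewrite ler0n.
have hA : forall j, 0 <= A j.
  by move=> j; apply: sumr_ge0 => x0 _; apply: mulr_ge0 => //; apply: ltW.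
have hS : 0 < S.
  rewrite lt_def; apply/andP; split; last by apply: sumr_ge0.
  apply/negP => /eqP hS0.
  have : \sum_(x0 : seqX K L) p0 x0 * wgt a l xt x0 = 0.
    rewrite -[RHS]hS0 /S (partition_big (fun x0 : seqX K L => x0 l) predT) //=.
  move=> E; have H := psumr_eq0P (fun x _ => mulr_ge0 (hp0 x) (ltW (hw x))) E.
  have : \sum_(x : seqX K L) p0 x = 0.
    apply: big1 => x _; have := H x isT.
    move/eqP; rewrite mulf_eq0 => /orP[/eqP //|]; by rewrite gt_eqF.
  by rewrite hp0sum; move/eqP; rewrite oner_eq0.
have hnu : forall j, nu 0 j = A j / S by move=> j; rewrite /nu xloo_eq.
set D := a * A k + c * S.
have hD : 0 < D by apply: ltr_wpDl; [apply: mulr_ge0 | apply: mulr_gt0].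
have hmu : forall j, mu 0 j = A j * (a * (k == j)%:R + c) / D.
  move=> j; rewrite /mu denoiser_eq; congr (_ / _).
  transitivity (\sum_i (a * (A i * (k == i)%:R) + c * A i)).
    by apply: eq_bigr => i _; rewrite mulrDr mulrCA (mulrC _ c).
  rewrite big_split /= -!big_distrr /= (bigD1 k) //= eqxx mulr1 big1 ?addr0 //.
  by move=> i /negbTE; rewrite eq_sym => ->; rewrite mulr0.
clearbody nu mu.
have P1 : mu = (1 - a + K%:R * a * nu 0 k)^-1 *:
             ((1 - a) *: nu + (K%:R * a * nu 0 k) *: evec R k).
  apply/rowP => j; rewrite /evec !mxE !hnu hmu /D /c.
  have hS0 : S != 0 by rewrite gt_eqF.
  have hD0 : D != 0 by rewrite gt_eqF.
  have hK0' : (K%:R : R) != 0 by rewrite gt_eqF.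
  have h1a : 0 < 1 - a by rewrite subr_gt0.
  have hE : (1 - a) * S + K%:R * a * A k != 0.
    by rewrite gt_eqF // ltr_wpDr ?mulr_gt0 // !mulr_ge0 // ltW.
  have hE' : K%:R * a * A k + (1 - a) * S != 0 by rewrite addrC.
  case: (eqVneq j k) => [->|/negbTE hjk]; rewrite ?eqxx ?hjk /=; field; by rewrite hS0 hE hK0'.
have h1a : 0 < 1 - a by rewrite subr_gt0.
have hS0 : S != 0 by rewrite gt_eqF.
have hK0' : (K%:R : R) != 0 by rewrite gt_eqF.
have hE : K%:R * a * A k + (1 - a) * S != 0.
  by rewrite gt_eqF // ltr_wpDl ?mulr_gt0 // !mulr_ge0 // ltW.
have hmuk : mu 0 k = A k * (a + c) / D by rewrite hmu eqxx mulr1.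
have hX : 1 + (K%:R - 1) * a - K%:R * a * mu 0 k =
   (1 - a + K%:R * a) * (1 - a) * S / (K%:R * a * A k + (1 - a) * S).
  rewrite hmuk /D /c; field; by rewrite hE hK0'.
have h2 : 1 - a + K%:R * a != 0.
  by rewrite gt_eqF // ltr_wpDr // mulr_ge0 // ltW.
have h3 : 1 - a != 0 by rewrite gt_eqF.
have hE2 : a * A k * K%:R + (1 - a) * S != 0.
  by rewrite [a * A k * _]mulrC mulrA.
have hX0 : 1 + (K%:R - 1) * a - K%:R * a * mu 0 k != 0.
  rewrite hX; apply: mulf_neq0; last by rewrite invr_eq0.
  by rewrite !mulf_neq0 // gt_eqF.
split => //.
  apply/rowP => j; rewrite /evec !mxE hX !hmu hnu /D /c.
  case: (eqVneq j k) => [->|/negbTE hjk]; rewrite ?eqxx ?hjk /=; field; by rewrite hK0' hE2 hS0 h3 h2.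
move=> f Hf.
set y := 1 + K%:R * a / (1 - a).
have hy : 0 < y.
  by rewrite /y ltr_wpDr // divr_ge0 // ?mulr_ge0 // ltW.
set Z := \sum_(i < K) expR (f 0 i).
have hZ : 0 < Z.
  rewrite /Z (bigD1 k) //=; apply: ltr_wpDr; last exact: expR_gt0.
  by apply: sumr_ge0 => i _; exact: expR_ge0.
have hsum : \sum_(i < K) expR ((f + ln y *: evec R k) 0 i) = Z + (y - 1) * expR (f 0 k).
  rewrite /Z (bigD1 k) //= [in RHS](bigD1 k) //= !addscE !evecE eqxx mulr1 expRD lnK ?posrE //.
  under eq_bigr => i hi do rewrite addscE evecE (negbTE hi) mulr0 addr0.
  ring.
rewrite P1 Hf /softmax; apply/rowP => j; rewrite hsum mxE [X in _ = X]mxE addscE evecE !mxE -/Z expRD.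
have hZ0 : Z != 0 by rewrite gt_eqF.
have hZ1 : Z + (y - 1) * expR (f 0 k) != 0.
  by rewrite gt_eqF // ltr_wpDr // mulr_ge0 ?expR_ge0 // subr_ge0 /y lerDl divr_ge0 // ?mulr_ge0 // ltW.
case: (eqVneq j k) => [->|/negbTE hjk]; rewrite ?eqxx ?hjk /= ?mulr1 ?mulr0 ?expR0 ?lnK ?posrE //; rewrite /y; field;
  (rewrite h3 hZ0 andbT /=;
   rewrite (_ : 1 - a + K%:R * a + -1 * (1 - a) = K%:R * a); last by ring);
  by rewrite gt_eqF // ltr_wpDr ?mulr_gt0 // ?mulr_ge0 ?expR_ge0 // ltW.
Qed.
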